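(* There exist constants $0<a<b<+\infty$ such that, for the triangle Markov chain $(\mathcal T(n))_{n\in\mathbb N}$ obtained by iterated random barycentric subdivision from any initial triangle, with $J_n=J(\mathcal T(n))$, one has for all $n\in\mathbb N$ $$aJ_n\le J_{n+1}\le bJ_n .$$
   Context: A triangle is given by three points of the plane which are not all equal. Barycentric subdivision: if a triangle has vertices $A,B,C$, let $D,E,F$ be the midpoints of $[A,B],[B,C],[C,A]$ and $G$ its barycenter; the medians cut it into the six triangles $\{A,D,G\},\{D,B,G\},\{B,E,G\},\{E,C,G\},\{C,F,G\},\{F,A,G\}$. The triangle Markov chain: $\mathcal T(0)$ is given and $\mathcal T(n+1)$ is chosen uniformly among the six triangles of the barycentric subdivision of $\mathcal T(n)$, independently of the past. For a triangle $\mathcal T$, $J(\mathcal T)\in(0,+\infty]$ is the sum of the squares of the lengths of its edges divided by its area ($J=+\infty$ for zero-area triangles, with the convention $c\cdot(+\infty)=+\infty$ for $c>0$). *)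

(* Defs.v *)
From HB Require Import structures.
From mathcomp Require Import all_boot all_order all_algebra.
From mathcomp Require Import reals constructive_ereal.
Set Implicit Arguments. Unset Strict Implicit. Unset Printing Implicit Defensive.
Import Order.TTheory GRing.Theory Num.Theory.
Local Open Scope ring_scope.

Section Tri.
Variable R : realType.

Definition point := (R * R)%type.
Definition triangle := (point * point * point)%type.

Definition tA (T : triangle) : point := T.1.1.
Definition tB (T : triangle) : point := T.1.2.
Definition tC (T : triangle) : point := T.2.

Definition nondegenerate_triple (T : triangle) : Prop :=
  ~ (tA T = tB T /\ tB T = tC T).

Definition midpoint (P Q : point) : point :=
  ((P.1 + Q.1) / 2, (P.2 + Q.2) / 2).

Definition barycenter (T : triangle) : point :=
  (((tA T).1 + (tB T).1 + (tC T).1) / 3, ((tA T).2 + (tB T).2 + (tC T).2) / 3).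

Definition sqdist (P Q : point) : R := (P.1 - Q.1) ^+ 2 + (P.2 - Q.2) ^+ 2.

Definition area (T : triangle) : R :=
  `|((tB T).1 - (tA T).1) * ((tC T).2 - (tA T).2)
    - ((tC T).1 - (tA T).1) * ((tB T).2 - (tA T).2)| / 2.

Definition J (T : triangle) : \bar R :=
  if area T == 0 then +oo%E
  else ((sqdist (tA T) (tB T) + sqdist (tB T) (tC T) + sqdist (tC T) (tA T))
        / area T)%:E.

(* the six triangles of the barycentric subdivision, in the paper's order:
   {A,D,G},{D,B,G},{B,E,G},{E,C,G},{C,F,G},{F,A,G}, with D,E,F the midpoints
   of [A,B],[B,C],[C,A] and G the barycenter *)
Definition subtri (T : triangle) (i : 'I_6) : triangle :=
  let A := tA T in let B := tB T in let C := tC T in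
  let D := midpoint A B in let E := midpoint B C in let F := midpoint C A in
  let G := barycenter T in
  match val i with
  | 0 => (A, D, G)
  | 1 => (D, B, G)
  | 2 => (B, E, G)
  | 3 => (E, C, G)
  | 4 => (C, F, G)
  | _ => (F, A, G)
  end.

(* trajectory of the triangle Markov chain: T(0) = T0 and
   T(n+1) = subtri (T(n)) (c n), where c n is the (uniform, i.i.d.) choice *)
Fixpoint chain (T0 : triangle) (c : nat -> 'I_6) (n : nat) : triangle :=
  match n with
  | 0 => T0
  | n'.+1 => subtri (chain T0 c n') (c n')
  end.

End Tri.

(* Main.v *)
Require Import Defs.
From mathcomp Require Import all_boot all_order all_algebra.
From mathcomp Require Import reals constructive_ereal.
From mathcomp Require Import ring lra.
Import Order.TTheory GRing.Theory Num.Theory.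
Local Open Scope ring_scope.

Section S.
Variable R : realType.
Definition q (a b c : R) := (a-b)^+2 + (b-c)^+2 + (c-a)^+2.
Lemma quad (al be ga u v X : R) : 0 < al -> be * be <= 4 * al * ga ->
  X = al * u^+2 + be * u * v + ga * v^+2 -> 0 <= X.
Proof.
move=> Ha Hd ->.
have H : 4 * al * (al * u^+2 + be * u * v + ga * v^+2) =
  (2*al*u + be*v)^+2 + (4*al*ga - be*be) * v^+2 by ring.
have H2 : 0 <= 4 * al * (al * u^+2 + be * u * v + ga * v^+2).
  rewrite H addr_ge0 ?sqr_ge0 // mulr_ge0 ?sqr_ge0 // subr_ge0 //.
by rewrite -(pmulr_rge0 _ (_ : 0 < 4 * al)) ?mulr_gt0.
Qed.
Lemma s0 (a b c : R) : q a b c / 4 <= 6 * q a ((a+b)/2) ((a+b+c)/3) <= 4 * q a b c.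
Proof.
apply/andP; split; rewrite -subr_ge0.
- refine (@quad (11%:R / 6%:R) (7%:R / 6%:R) (5%:R / 6%:R) (b-a) (c-a) _ _ _ _); [lra|lra|by rewrite /q; field].
- refine (@quad (17%:R / 3%:R) (-(26%:R / 3%:R)) (20%:R / 3%:R) (b-a) (c-a) _ _ _ _); [lra|lra|by rewrite /q; field].
Qed.

Lemma s1 (a b c : R) : q a b c / 4 <= 6 * q ((a+b)/2) b ((a+b+c)/3) <= 4 * q a b c.
Proof.
apply/andP; split; rewrite -subr_ge0.
- refine (@quad (23%:R / 6%:R) (-(17%:R / 6%:R)) (5%:R / 6%:R) (b-a) (c-a) _ _ _ _); [lra|lra|by rewrite /q; field].
- refine (@quad (11%:R / 3%:R) (-(14%:R / 3%:R)) (20%:R / 3%:R) (b-a) (c-a) _ _ _ _); [lra|lra|by rewrite /q; field].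
Qed.

Lemma s2 (a b c : R) : q a b c / 4 <= 6 * q b ((b+c)/2) ((a+b+c)/3) <= 4 * q a b c.
Proof.
apply/andP; split; rewrite -subr_ge0.
- refine (@quad (23%:R / 6%:R) (-(29%:R / 6%:R)) (11%:R / 6%:R) (b-a) (c-a) _ _ _ _); [lra|lra|by rewrite /q; field].
- refine (@quad (11%:R / 3%:R) (-(8%:R / 3%:R)) (17%:R / 3%:R) (b-a) (c-a) _ _ _ _); [lra|lra|by rewrite /q; field].
Qed.

Lemma s3 (a b c : R) : q a b c / 4 <= 6 * q ((b+c)/2) c ((a+b+c)/3) <= 4 * q a b c.
Proof.
apply/andP; split; rewrite -subr_ge0.
- refine (@quad (11%:R / 6%:R) (-(29%:R / 6%:R)) (23%:R / 6%:R) (b-a) (c-a) _ _ _ _); [lra|lra|by rewrite /q; field].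
- refine (@quad (17%:R / 3%:R) (-(8%:R / 3%:R)) (11%:R / 3%:R) (b-a) (c-a) _ _ _ _); [lra|lra|by rewrite /q; field].
Qed.

Lemma s4 (a b c : R) : q a b c / 4 <= 6 * q c ((c+a)/2) ((a+b+c)/3) <= 4 * q a b c.
Proof.
apply/andP; split; rewrite -subr_ge0.
- refine (@quad (5%:R / 6%:R) (-(17%:R / 6%:R)) (23%:R / 6%:R) (b-a) (c-a) _ _ _ _); [lra|lra|by rewrite /q; field].
- refine (@quad (20%:R / 3%:R) (-(14%:R / 3%:R)) (11%:R / 3%:R) (b-a) (c-a) _ _ _ _); [lra|lra|by rewrite /q; field].
Qed.

Lemma s5 (a b c : R) : q a b c / 4 <= 6 * q ((c+a)/2) a ((a+b+c)/3) <= 4 * q a b c.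
Proof.
apply/andP; split; rewrite -subr_ge0.
- refine (@quad (5%:R / 6%:R) (7%:R / 6%:R) (11%:R / 6%:R) (b-a) (c-a) _ _ _ _); [lra|lra|by rewrite /q; field].
- refine (@quad (20%:R / 3%:R) (-(26%:R / 3%:R)) (17%:R / 3%:R) (b-a) (c-a) _ _ _ _); [lra|lra|by rewrite /q; field].
Qed.

Definition Ssum (T : triangle R) : R :=
  sqdist (tA T) (tB T) + sqdist (tB T) (tC T) + sqdist (tC T) (tA T).

Lemma aux (x d : R) : x = d/6 -> `|x|/2 = `|d|/2/6.
Proof.
move=> ->; rewrite normrM normfV (ger0_norm (_ : (0:R) <= 6)) //.
by rewrite mulrAC.
Qed.

Lemma area_sub (T : triangle R) (i : 'I_6) : area (subtri T i) = area T / 6.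
Proof.
case: T => [[[a1 a2] [b1 b2]] [c1 c2]].
rewrite /area /subtri /tA /tB /tC /midpoint /barycenter /=.
by case: i => [[|[|[|[|[|[|k]]]]]] Hi] /=; apply: aux; field.
Qed.

Lemma S_sub (T : triangle R) (i : 'I_6) :
  Ssum T / 4 <= 6 * Ssum (subtri T i) <= 4 * Ssum T.
Proof.
case: T => [[[a1 a2] [b1 b2]] [c1 c2]].
have E : forall x y z x' y' z' : R, sqdist (x, x') (y, y') + sqdist (y, y') (z, z')
   + sqdist (z, z') (x, x') = q x y z + q x' y' z'.
  by move=> *; rewrite /sqdist /q /=; ring.
rewrite /Ssum /subtri /tA /tB /tC /midpoint /barycenter /=.
case: i => [[|[|[|[|[|[|k]]]]]] Hi] /=; rewrite !E.
- by move: (s0 a1 b1 c1) (s0 a2 b2 c2) => /andP[? ?] /andP[? ?]; apply/andP; split; lra.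
- by move: (s1 a1 b1 c1) (s1 a2 b2 c2) => /andP[? ?] /andP[? ?]; apply/andP; split; lra.
- by move: (s2 a1 b1 c1) (s2 a2 b2 c2) => /andP[? ?] /andP[? ?]; apply/andP; split; lra.
- by move: (s3 a1 b1 c1) (s3 a2 b2 c2) => /andP[? ?] /andP[? ?]; apply/andP; split; lra.
- by move: (s4 a1 b1 c1) (s4 a2 b2 c2) => /andP[? ?] /andP[? ?]; apply/andP; split; lra.
- by move: (s5 a1 b1 c1) (s5 a2 b2 c2) => /andP[? ?] /andP[? ?]; apply/andP; split; lra.
- by move: (s5 a1 b1 c1) (s5 a2 b2 c2) => /andP[? ?] /andP[? ?]; apply/andP; split; lra.
Qed.

Lemma step (T : triangle R) (i : 'I_6) :
  ((1/4)%:E * J T <= J (subtri T i))%E /\ (J (subtri T i) <= 4%:E * J T)%E.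
Proof.
have HS := S_sub T i.
rewrite /J -/(Ssum T) -/(Ssum (subtri T i)) area_sub.
have A0 : 0 <= area T by rewrite /area divr_ge0.
case: (area T =P 0) => HA.
  rewrite HA mul0r eqxx; split; first exact: leey.
  by rewrite [X in (_ <= X)%E]muleC gt0_mulye ?lte_fin.

have Hn : area T != 0 by apply/eqP.
have Ap : 0 < area T by rewrite lt_neqAle eq_sym A0 andbT.
have -> : (area T / 6 == 0) = false.
  by apply/negbTE; rewrite mulf_neq0 // invr_eq0 pnatr_eq0.
have -> : Ssum (subtri T i) / (area T / 6) = 6 * Ssum (subtri T i) / area T.
  by field.
move: HS => /andP[H1 H2].
split; rewrite -?EFinM lee_fin.
- rewrite mulrA; apply: ler_wpM2r; [by rewrite invr_ge0 ltW | lra].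
- rewrite mulrA; apply: ler_wpM2r; [by rewrite invr_ge0 ltW | lra].
Qed.
End S.

Theorem lemma6 (R : realType) :
  exists a b : R, 0 < a /\ a < b /\
    forall (T0 : triangle R) (c : nat -> 'I_6) (n : nat),
      nondegenerate_triple T0 ->
      (a%:E * J (chain T0 c n) <= J (chain T0 c n.+1))%E /\
      (J (chain T0 c n.+1) <= b%:E * J (chain T0 c n))%E.
Proof.
exists (1/4), 4; split; first lra.
split; first lra.
by move=> T0 c n _; exact: step.
Qed.
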